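(* Let $X$ be a Banach space and $T\in\mathrm{Lip}_0(X)$. Then (a) $\|I+T\|_L=1+\|T\|_L$ if and only if $\sup\operatorname{Re}W(T)=\|T\|_L$; (b) $\max_{\alpha\in\mathbb{T}}\|I+\alpha T\|_L=1+\|T\|_L$ if and only if $\omega(T)=\|T\|_L$. Consequently, $n_L(X)=1$ if and only if every $T\in\mathrm{Lip}_0(X)$ with $\|T\|_L=1$ satisfies $\max_{\alpha\in\mathbb{T}}\|I+\alpha T\|_L=2$.
   Context: $X$ is a Banach space over $\mathbb{K}=\mathbb{R}$ or $\mathbb{C}$; $\mathbb{T}=\{\alpha\in\mathbb{K}:|\alpha|=1\}$; $I$ is the identity of $X$. $\mathrm{Lip}_0(X)$ is the set of Lipschitz maps $T:X\to X$ with $T(0)=0$, with $\|T\|_L=\sup\{\|Tx-Ty\|/\|x-y\|: x\neq y\}$. $D(x)=\{x^*\in X^*: x^*(x)=\|x^*\|\|x\|=\|x\|^2\}$. $W(T)=\{ f(Tx-Ty)/\|x-y\|^2 : x\neq y,\ f\in D(x-y)\}$, $\omega(T)=\sup\{|\lambda|:\lambda\in W(T)\}$, and $n_L(X)=\inf\{\omega(T): T\in\mathrm{Lip}_0(X),\ \|T\|_L=1\}$. *)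

(* Defs.v *)
From Stdlib Require Import Reals Lra Classical ClassicalEpsilon.
Open Scope R_scope.

Record Cplx := mkC { cre : R; cim : R }.
Definition Cadd (z w : Cplx) := mkC (cre z + cre w) (cim z + cim w).
Definition Cmul (z w : Cplx) :=
  mkC (cre z * cre w - cim z * cim w) (cre z * cim w + cim z * cre w).
Definition Copp (z : Cplx) := mkC (- cre z) (- cim z).
Definition Cabs (z : Cplx) := sqrt (cre z ^ 2 + cim z ^ 2).

Inductive kind := RealK | ComplexK.

Definition Scal (k : kind) : Type :=
  match k with RealK => R | ComplexK => Cplx end.

Definition sadd (k : kind) : Scal k -> Scal k -> Scal k :=
  match k as k0 return Scal k0 -> Scal k0 -> Scal k0 with
  | RealK => Rplus | ComplexK => Cadd end.
Definition smul (k : kind) : Scal k -> Scal k -> Scal k :=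
  match k as k0 return Scal k0 -> Scal k0 -> Scal k0 with
  | RealK => Rmult | ComplexK => Cmul end.
Definition sopp (k : kind) : Scal k -> Scal k :=
  match k as k0 return Scal k0 -> Scal k0 with
  | RealK => Ropp | ComplexK => Copp end.
Definition sofR (k : kind) : R -> Scal k :=
  match k as k0 return R -> Scal k0 with
  | RealK => fun r => r | ComplexK => fun r => mkC r 0 end.
Definition s0 (k : kind) : Scal k := sofR k 0.
Definition s1 (k : kind) : Scal k := sofR k 1.
Definition sabs (k : kind) : Scal k -> R :=
  match k as k0 return Scal k0 -> R with
  | RealK => Rabs | ComplexK => Cabs end.
Definition sRe (k : kind) : Scal k -> R :=
  match k as k0 return Scal k0 -> R with
  | RealK => fun r => r | ComplexK => cre end.

Record BanachSpace (k : kind) := {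
  V :> Type;
  vadd : V -> V -> V;
  vzero : V;
  vopp : V -> V;
  vscal : Scal k -> V -> V;
  vnorm : V -> R;
  vaddA : forall x y z, vadd x (vadd y z) = vadd (vadd x y) z;
  vaddC : forall x y, vadd x y = vadd y x;
  vadd0 : forall x, vadd x vzero = x;
  vaddN : forall x, vadd x (vopp x) = vzero;
  vscal1 : forall x, vscal (s1 k) x = x;
  vscalA : forall a b x, vscal a (vscal b x) = vscal (smul k a b) x;
  vscalDl : forall a b x, vscal (sadd k a b) x = vadd (vscal a x) (vscal b x);
  vscalDr : forall a x y, vscal a (vadd x y) = vadd (vscal a x) (vscal a y);
  vnorm_eq0 : forall x, vnorm x = 0 -> x = vzero;
  vnormZ : forall a x, vnorm (vscal a x) = sabs k a * vnorm x;
  vnorm_tri : forall x y, vnorm (vadd x y) <= vnorm x + vnorm y;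
  vcomplete : forall u : nat -> V,
    (forall eps, 0 < eps -> exists N, forall n m, (N <= n)%nat -> (N <= m)%nat ->
        vnorm (vadd (u n) (vopp (u m))) < eps) ->
    exists l, forall eps, 0 < eps -> exists N, forall n, (N <= n)%nat ->
        vnorm (vadd (u n) (vopp l)) < eps
}.

Arguments vadd {k X} : rename.
Arguments vzero {k} X : rename.
Arguments vopp {k X} : rename.
Arguments vscal {k X} : rename.
Arguments vnorm {k X} : rename.

Definition vsub {k} {X : BanachSpace k} (x y : X) : X := vadd x (vopp y).

(** * Suprema / infima of real sets (value 0 if no least upper bound exists;
      all sets used below are nonempty and bounded). *)
Definition Rsup (E : R -> Prop) : R :=
  match excluded_middle_informative (exists l, is_lub E l) with
  | left H => proj1_sig (constructive_indefinite_description _ H)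
  | right _ => 0
  end.
Definition Rinf (E : R -> Prop) : R := - Rsup (fun r => E (- r)).

Definition is_max (E : R -> Prop) (m : R) : Prop := E m /\ forall r, E r -> r <= m.

Definition is_linear_functional {k} (X : BanachSpace k) (f : X -> Scal k) : Prop :=
  (forall x y, f (vadd x y) = sadd k (f x) (f y)) /\
  (forall a x, f (vscal a x) = smul k a (f x)).

Definition in_dual {k} (X : BanachSpace k) (f : X -> Scal k) : Prop :=
  is_linear_functional X f /\ exists M, forall x, sabs k (f x) <= M * vnorm x.

Definition dual_norm {k} (X : BanachSpace k) (f : X -> Scal k) : R :=
  Rsup (fun r => exists x : X, vnorm x <= 1 /\ r = sabs k (f x)).

Definition Dset {k} (X : BanachSpace k) (x : X) (f : X -> Scal k) : Prop :=
  in_dual X f /\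
  f x = sofR k (dual_norm X f * vnorm x) /\
  dual_norm X f * vnorm x = vnorm x ^ 2.

Definition Lip0 {k} (X : BanachSpace k) (T : X -> X) : Prop :=
  T (vzero X) = vzero X /\
  exists L, forall x y : X, vnorm (vsub (T x) (T y)) <= L * vnorm (vsub x y).

Definition lipnorm {k} (X : BanachSpace k) (T : X -> X) : R :=
  Rsup (fun r => exists x y : X, x <> y /\
          r = vnorm (vsub (T x) (T y)) / vnorm (vsub x y)).

Definition Wset {k} (X : BanachSpace k) (T : X -> X) (l : Scal k) : Prop :=
  exists (x y : X) (f : X -> Scal k), x <> y /\ Dset X (vsub x y) f /\
    l = smul k (f (vsub (T x) (T y))) (sofR k (/ (vnorm (vsub x y) ^ 2))).

Definition supReW {k} (X : BanachSpace k) (T : X -> X) : R :=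
  Rsup (fun r => exists l, Wset X T l /\ r = sRe k l).

Definition omega {k} (X : BanachSpace k) (T : X -> X) : R :=
  Rsup (fun r => exists l, Wset X T l /\ r = sabs k l).

Definition nL {k} (X : BanachSpace k) : R :=
  Rinf (fun r => exists T : X -> X, Lip0 X T /\ lipnorm X T = 1 /\ r = omega X T).

Definition IplusT {k} (X : BanachSpace k) (a : Scal k) (T : X -> X) : X -> X :=
  fun x => vadd x (vscal a (T x)).

Definition rot_norms {k} (X : BanachSpace k) (T : X -> X) (r : R) : Prop :=
  exists a : Scal k, sabs k a = 1 /\ r = lipnorm X (IplusT X a T).

(* Main.v *)
Require Import Defs.
From Stdlib Require Import Reals.
Open Scope R_scope.
From Stdlib Require Import Lra Classical ClassicalEpsilon FunctionalExtensionality PropExtensionality.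
From mathcomp Require classical_sets.

Lemma sadd_sofR k r s : sadd k (sofR k r) (sofR k s) = sofR k (r + s).
Proof. destruct k; simpl; auto. unfold Cadd; simpl; f_equal; ring. Qed.

Lemma smul_sofR k r s : smul k (sofR k r) (sofR k s) = sofR k (r * s).
Proof. destruct k; simpl; auto. unfold Cmul; simpl; f_equal; ring. Qed.

Lemma sopp_sofR k r : sopp k (sofR k r) = sofR k (- r).
Proof. destruct k; simpl; auto. unfold Copp; simpl; f_equal; ring. Qed.

Lemma sabs_sofR k r : sabs k (sofR k r) = Rabs r.
Proof. destruct k; simpl; auto. unfold Cabs; simpl.
  rewrite <- sqrt_Rsqr_abs. f_equal. unfold Rsqr; ring. Qed.

Lemma sRe_sofR k r : sRe k (sofR k r) = r.
Proof. destruct k; reflexivity. Qed.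

Lemma sabs_ge0 k z : 0 <= sabs k z.
Proof. destruct k; simpl. apply Rabs_pos. unfold Cabs; apply sqrt_pos. Qed.

Lemma sabs_mul k a b : sabs k (smul k a b) = sabs k a * sabs k b.
Proof. destruct k; simpl. apply Rabs_mult.
  unfold Cabs, Cmul; simpl. rewrite <- sqrt_mult_alt.
  f_equal; ring. destruct a; simpl; nra. Qed.

Lemma sRe_add k a b : sRe k (sadd k a b) = sRe k a + sRe k b.
Proof. destruct k; reflexivity. Qed.

Lemma sRe_mulr k z c : sRe k (smul k z (sofR k c)) = sRe k z * c.
Proof. destruct k; simpl; auto. ring. Qed.

Lemma sRe_mull k z c : sRe k (smul k (sofR k c) z) = c * sRe k z.
Proof. destruct k; simpl; auto. ring. Qed.

Lemma smul_assoc_sofR k a b c :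
  sRe k (smul k a (smul k b (sofR k c))) = sRe k (smul k a b) * c.
Proof. destruct k; simpl; auto. ring. ring. Qed.

Lemma sRe_le_abs k z : sRe k z <= sabs k z.
Proof. destruct k; simpl. apply Rle_abs.
  unfold Cabs. destruct z as [a b]; simpl.
  apply Rle_trans with (Rabs a). apply Rle_abs.
  rewrite <- sqrt_Rsqr_abs. apply sqrt_le_1_alt. unfold Rsqr. simpl. nra. Qed.

Lemma sRe_ge_mabs k z : - sabs k z <= sRe k z.
Proof. destruct k; simpl.
  - pose proof (Rle_abs (- z)). rewrite Rabs_Ropp in H. lra.
  - unfold Cabs. destruct z as [a b]; simpl.
    assert (Rabs a <= sqrt (a^2+b^2)).
    { rewrite <- sqrt_Rsqr_abs. apply sqrt_le_1_alt. unfold Rsqr. simpl. nra. }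
    pose proof (Rle_abs (-a)). rewrite Rabs_Ropp in H0. simpl in H. lra. Qed.

Lemma sabs_s0 k : sabs k (s0 k) = 0.
Proof. unfold s0. rewrite sabs_sofR. apply Rabs_R0. Qed.
Lemma sabs_s1 k : sabs k (s1 k) = 1.
Proof. unfold s1. rewrite sabs_sofR. apply Rabs_R1. Qed.

Arguments vaddA {k b0}. Arguments vaddC {k b0}. Arguments vadd0 {k b0}.
Arguments vaddN {k b0}. Arguments vscal1 {k b0}. Arguments vscalA {k b0}.
Arguments vscalDl {k b0}. Arguments vscalDr {k b0}. Arguments vnorm_eq0 {k b0}.
Arguments vnormZ {k b0}. Arguments vnorm_tri {k b0}.

Definition rs {k} {X : BanachSpace k} (r : R) (x : X) : X := vscal (sofR k r) x.

Lemma add0l {k} {X : BanachSpace k} (x : X) : vadd (vzero X) x = x.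
Proof. rewrite vaddC. apply vadd0. Qed.

Lemma addNl {k} {X : BanachSpace k} (x : X) : vadd (vopp x) x = vzero X.
Proof. rewrite vaddC. apply vaddN. Qed.

Lemma add_cancel_l {k} {X : BanachSpace k} (a b c : X) : vadd a b = vadd a c -> b = c.
Proof. intro H. rewrite <- (add0l b), <- (add0l c), <- (addNl a), <- !vaddA, H. reflexivity. Qed.

Lemma add_cancel_r {k} {X : BanachSpace k} (a b c : X) : vadd b a = vadd c a -> b = c.
Proof. rewrite (vaddC b), (vaddC c). apply add_cancel_l. Qed.

Lemma add_eq_self {k} {X : BanachSpace k} (a b : X) : vadd a b = a -> b = vzero X.
Proof. intro H. apply (add_cancel_l a). rewrite vadd0. exact H. Qed.

Lemma s0_s0 k : sadd k (s0 k) (s0 k) = s0 k.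
Proof. unfold s0. rewrite sadd_sofR. f_equal; ring. Qed.

Lemma vscal_s0 {k} {X : BanachSpace k} (x : X) : vscal (s0 k) x = vzero X.
Proof. apply (add_eq_self (vscal (s0 k) x)). rewrite <- vscalDl, s0_s0. reflexivity. Qed.

Lemma vscal_z0 {k} {X : BanachSpace k} a : vscal a (vzero X) = vzero X.
Proof. apply (add_eq_self (vscal a (vzero X))). rewrite <- vscalDr, vadd0. reflexivity. Qed.

Lemma norm0 {k} (X : BanachSpace k) : vnorm (vzero X) = 0.
Proof. rewrite <- (vscal_s0 (vzero X)), vnormZ, sabs_s0. ring. Qed.

Lemma opp_unique {k} {X : BanachSpace k} (a b : X) : vadd a b = vzero X -> b = vopp a.
Proof. intro H. apply (add_cancel_l a). rewrite H, vaddN. reflexivity. Qed.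

Lemma oppK {k} {X : BanachSpace k} (a : X) : vopp (vopp a) = a.
Proof. symmetry. apply opp_unique. apply addNl. Qed.

Lemma opp_add {k} {X : BanachSpace k} (a b : X) : vopp (vadd a b) = vadd (vopp a) (vopp b).
Proof. symmetry. apply opp_unique.
  rewrite (vaddC (vopp a)), vaddA, <- (vaddA a), vaddN, vadd0, vaddN. reflexivity. Qed.

Lemma opp0 {k} (X : BanachSpace k) : vopp (vzero X) = vzero X.
Proof. symmetry. apply opp_unique. apply vadd0. Qed.

Lemma vopp_scal {k} {X : BanachSpace k} (x : X) : vopp x = vscal (sopp k (s1 k)) x.
Proof. symmetry. apply opp_unique. rewrite <- (vscal1 x) at 1. rewrite <- vscalDl.
  unfold s1. rewrite sopp_sofR, sadd_sofR. replace (1 + - (1)) with 0 by ring. exact (vscal_s0 x). Qed.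

Lemma norm_opp {k} {X : BanachSpace k} (x : X) : vnorm (vopp x) = vnorm x.
Proof. rewrite vopp_scal, vnormZ. unfold s1. rewrite sopp_sofR, sabs_sofR, Rabs_Ropp, Rabs_R1. ring. Qed.

Lemma norm_ge0 {k} {X : BanachSpace k} (x : X) : 0 <= vnorm x.
Proof. pose proof (vnorm_tri x (vopp x)). rewrite vaddN, norm0, norm_opp in H. lra. Qed.

Lemma scal_opp {k} {X : BanachSpace k} a (x : X) : vscal a (vopp x) = vopp (vscal a x).
Proof. apply opp_unique. rewrite <- vscalDr, vaddN. apply vscal_z0. Qed.

Lemma subxx {k} {X : BanachSpace k} (x : X) : vsub x x = vzero X.
Proof. apply vaddN. Qed.

Lemma sub_eq0 {k} {X : BanachSpace k} (x y : X) : vsub x y = vzero X -> x = y.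
Proof. unfold vsub. intro H. rewrite <- (vadd0 x), <- (addNl y), vaddA, H. apply add0l. Qed.

Lemma sub_opp {k} {X : BanachSpace k} (x y : X) : vopp (vsub x y) = vsub y x.
Proof. unfold vsub. rewrite opp_add, oppK, vaddC. reflexivity. Qed.

Lemma norm_sub_sym {k} {X : BanachSpace k} (x y : X) : vnorm (vsub x y) = vnorm (vsub y x).
Proof. rewrite <- sub_opp, norm_opp. reflexivity. Qed.

Lemma norm_pos {k} {X : BanachSpace k} (x y : X) : x <> y -> 0 < vnorm (vsub x y).
Proof. intro H. destruct (norm_ge0 (vsub x y)) as [h|h]; auto.
  exfalso. apply H. apply sub_eq0. apply vnorm_eq0. auto. Qed.

Lemma norm_pos0 {k} {X : BanachSpace k} (x : X) : x <> vzero X -> 0 < vnorm x.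
Proof. intro H. destruct (norm_ge0 x) as [h|h]; auto.
  exfalso. apply H. apply vnorm_eq0. auto. Qed.

Lemma vaddACA {k} {X : BanachSpace k} (a b c d : X) :
  vadd (vadd a b) (vadd c d) = vadd (vadd a c) (vadd b d).
Proof. rewrite <- !vaddA. f_equal. rewrite !vaddA. f_equal. apply vaddC. Qed.

Lemma sub_add_add {k} {X : BanachSpace k} (a b c d : X) :
  vsub (vadd a b) (vadd c d) = vadd (vsub a c) (vsub b d).
Proof. unfold vsub. rewrite opp_add. apply vaddACA. Qed.

Lemma scal_sub {k} {X : BanachSpace k} a (x y : X) : vscal a (vsub x y) = vsub (vscal a x) (vscal a y).
Proof. unfold vsub. rewrite vscalDr, scal_opp. reflexivity. Qed.

Lemma sub_add_r {k} {X : BanachSpace k} (a b : X) : vadd (vsub a b) b = a.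
Proof. unfold vsub. rewrite <- vaddA, addNl, vadd0. reflexivity. Qed.

Lemma sub_sub_r {k} {X : BanachSpace k} (a b c : X) : vsub a (vsub b c) = vadd (vsub a b) c.
Proof. unfold vsub at 1. rewrite sub_opp. unfold vsub. rewrite (vaddC c), vaddA. reflexivity. Qed.

Lemma sub_common_l {k} {X : BanachSpace k} (a b c : X) : vsub (vsub a b) (vsub a c) = vsub c b.
Proof. unfold vsub. rewrite opp_add, oppK. rewrite vaddACA, vaddN, add0l, vaddC. reflexivity. Qed.

Lemma rs_add {k} {X : BanachSpace k} r s (x : X) : rs (r + s) x = vadd (rs r x) (rs s x).
Proof. unfold rs. rewrite <- sadd_sofR. apply vscalDl. Qed.
Lemma rs_addr {k} {X : BanachSpace k} r (x y : X) : rs r (vadd x y) = vadd (rs r x) (rs r y).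
Proof. unfold rs. apply vscalDr. Qed.
Lemma rs_mul {k} {X : BanachSpace k} r s (x : X) : rs r (rs s x) = rs (r * s) x.
Proof. unfold rs. rewrite vscalA, smul_sofR. reflexivity. Qed.
Lemma rs1 {k} {X : BanachSpace k} (x : X) : rs 1 x = x.
Proof. apply vscal1. Qed.
Lemma rs0 {k} {X : BanachSpace k} (x : X) : rs 0 x = vzero X.
Proof. apply vscal_s0. Qed.
Lemma rs_z0 {k} {X : BanachSpace k} r : rs r (vzero X) = vzero X.
Proof. apply vscal_z0. Qed.
Lemma rs_opp {k} {X : BanachSpace k} r (x : X) : rs (- r) x = vopp (rs r x).
Proof. apply opp_unique. rewrite <- rs_add. replace (r + - r) with 0 by ring. exact (rs0 x). Qed.
Lemma rs_norm {k} {X : BanachSpace k} r (x : X) : vnorm (rs r x) = Rabs r * vnorm x.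
Proof. unfold rs. rewrite vnormZ, sabs_sofR. reflexivity. Qed.
Lemma rs_sub {k} {X : BanachSpace k} r (x y : X) : rs r (vsub x y) = vsub (rs r x) (rs r y).
Proof. apply scal_sub. Qed.
Lemma rs_oppv {k} {X : BanachSpace k} r (x : X) : rs r (vopp x) = vopp (rs r x).
Proof. apply scal_opp. Qed.

Lemma lub_unique E a b : is_lub E a -> is_lub E b -> a = b.
Proof. intros [Ha Ha'] [Hb Hb']. apply Rle_antisym; auto. Qed.

Lemma Rsup_lub E l : is_lub E l -> Rsup E = l.
Proof. intro H. unfold Rsup. destruct excluded_middle_informative as [e|n].
  - destruct (constructive_indefinite_description _ e) as [m Hm]; simpl.
    eapply lub_unique; eauto.
  - exfalso. apply n. eauto. Qed.

Lemma Rsup_spec E : (exists x, E x) -> (exists b, forall x, E x -> x <= b) -> is_lub E (Rsup E).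
Proof. intros Hne [b Hb].
  destruct (completeness E) as [m Hm]. exists b. intros x Hx. auto. exact Hne.
  rewrite (Rsup_lub E m Hm). exact Hm. Qed.

Lemma lub_le E l x : is_lub E l -> E x -> x <= l.
Proof. intros [H _] Hx. apply H, Hx. Qed.

Lemma lub_least E l b : is_lub E l -> (forall x, E x -> x <= b) -> l <= b.
Proof. intros [_ H] Hb. apply H. intros x Hx; auto. Qed.

Lemma lub_approx E l eps : is_lub E l -> 0 < eps -> exists x, E x /\ l - eps < x.
Proof. intros H He. apply NNPP. intro Hn.
  assert (l <= l - eps).
  { apply (lub_least E l); auto. intros x Hx. apply Rnot_lt_le. intro Hlt. apply Hn. eauto. }
  lra. Qed.

Definition graphQ {k} (X : BanachSpace k) (x0 : X) (G : X * R -> Prop) :=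
  (forall u a b, G (u,a) -> G (u,b) -> a = b) /\
  G (x0, vnorm x0) /\
  (forall u a v b, G (u,a) -> G (v,b) -> G (vadd u v, a + b)) /\
  (forall r u a, G (u,a) -> G (rs r u, r * a)) /\
  (forall u a, G (u,a) -> a <= vnorm u).

Definition graphP {k} (X : BanachSpace k) (x0 : X) (G : X * R -> Prop) :=
  graphQ X x0 G \/ (forall p, ~ G p).

Lemma graphP_Q {k} (X : BanachSpace k) x0 G p : graphP X x0 G -> G p -> graphQ X x0 G.
Proof. intros [H|H] Hp; auto. exfalso; eapply H; eauto. Qed.

Lemma graph_chain {k} (X : BanachSpace k) x0 :
  forall F : classical_sets.set (classical_sets.set (X * R)),
  classical_sets.subset F (graphP X x0) ->
  classical_sets.total_on F classical_sets.subset ->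
  graphP X x0 (classical_sets.bigcup F (fun G => G)).
Proof.
  intros F HF Htot.
  set (U := classical_sets.bigcup F (fun G => G)).
  assert (HU : forall p, U p <-> exists G, F G /\ G p).
  { intro p. unfold U, classical_sets.bigcup, classical_sets.mkset. split.
    - intros [G H1 H2]. eauto.
    - intros [G [H1 H2]]. econstructor; eauto. }
  destruct (classic (exists p, U p)) as [[p0 Hp0]|Hn].
  2:{ right. intros p Hp. apply Hn. eauto. }
  left. apply HU in Hp0. destruct Hp0 as [G0 [FG0 G0p0]].
  assert (QG0 : graphQ X x0 G0) by (eapply graphP_Q; eauto).
  assert (two : forall p q, U p -> U q -> exists G, F G /\ graphQ X x0 G /\ G p /\ G q).
  { intros p q Hp Hq. apply HU in Hp. apply HU in Hq.
    destruct Hp as [G1 [F1 G1p]]. destruct Hq as [G2 [F2 G2q]].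
    destruct (Htot G1 G2 F1 F2) as [S|S].
    - exists G2. split; [auto|split; [|split; [apply S; auto|auto]]]. apply (graphP_Q X x0 G2 q); [apply HF; exact F2|exact G2q].
    - exists G1. split; [auto|split; [|split; [auto|apply S; auto]]]. apply (graphP_Q X x0 G1 p); [apply HF; exact F1|exact G1p]. }
  assert (one : forall p, U p -> exists G, F G /\ graphQ X x0 G /\ G p).
  { intros p Hp. destruct (two p p Hp Hp) as [G [? [? [? ?]]]]. eauto. }
  split; [|split; [|split; [|split]]].
  - intros u a b Ha Hb. destruct (two _ _ Ha Hb) as [G [_ [[Q1 _] [? ?]]]]. eauto.
  - apply HU. exists G0. split; auto. apply QG0.
  - intros u a v b Ha Hb. destruct (two _ _ Ha Hb) as [G [FG [[_ [_ [Q3 _]]] [? ?]]]].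
    apply HU. exists G. split; auto.
  - intros r u a Ha. destruct (one _ Ha) as [G [FG [[_ [_ [_ [Q4 _]]]] ?]]].
    apply HU. exists G. split; auto.
  - intros u a Ha. destruct (one _ Ha) as [G [FG [[_ [_ [_ [_ Q5]]]] ?]]]. auto.
Qed.

Lemma sub_add_l {k} {X : BanachSpace k} (u z : X) : vsub (vadd u z) u = z.
Proof. unfold vsub. rewrite (vaddC u), <- vaddA, vaddN, vadd0. reflexivity. Qed.

Lemma graph_extend {k} (X : BanachSpace k) x0 A y :
  graphQ X x0 A -> (forall c, ~ A (y, c)) ->
  exists A', graphQ X x0 A' /\ classical_sets.proper A A'.
Proof.
  intros QA Hy. destruct QA as [Q1 [Q2 [Q3 [Q4 Q5]]]].
  assert (A00 : A (vzero X, 0)).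
  { pose proof (Q4 0 _ _ Q2). rewrite rs0, Rmult_0_l in H. exact H. }
  assert (Aneg : forall u a, A (u,a) -> A (vopp u, - a)).
  { intros u a H. pose proof (Q4 (- (1)) _ _ H). rewrite rs_opp, rs1 in H0.
    replace (- a) with (- (1) * a) by ring. exact H0. }
  set (S := fun r => exists v b, A (v,b) /\ r = b - vnorm (vsub v y)).
  assert (Bnd : forall u a v b, A (u,a) -> A (v,b) -> b - vnorm (vsub v y) <= vnorm (vadd u y) - a).
  { intros u a v b Ha Hb. pose proof (Q5 _ _ (Q3 _ _ _ _ Ha Hb)).
    assert (E : vadd u v = vadd (vadd u y) (vsub v y)).
    { unfold vsub. rewrite vaddACA, vaddN, vadd0. reflexivity. }
    rewrite E in H. pose proof (vnorm_tri (vadd u y) (vsub v y)). lra. }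
  assert (HS : is_lub S (Rsup S)).
  { apply Rsup_spec.
    - exists (0 - vnorm (vsub (vzero X) y)). exists (vzero X), 0. split; auto.
    - exists (vnorm (vadd (vzero X) y) - 0). intros x [v [b [Hv ->]]]. apply Bnd; auto. }
  set (c := Rsup S) in *.
  assert (c_ge : forall v b, A (v,b) -> b - vnorm (vsub v y) <= c).
  { intros v b H. apply (lub_le S c); auto. exists v, b. auto. }
  assert (c_le : forall u a, A (u,a) -> c <= vnorm (vadd u y) - a).
  { intros u a H. apply (lub_least S c); auto. intros x [v [b [Hv ->]]]. apply Bnd; auto. }
  set (A' := fun p : X * R => exists u a t, A (u,a) /\ p = (vadd u (rs t y), a + t * c)).
  exists A'. split; [split; [|split; [|split; [|split]]]|].
  - intros w e1 e2 [u [a [t [Ha E1]]]] [u' [a' [t' [Ha' E2]]]].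
    injection E1 as E1 F1. injection E2 as E2 F2. subst e1 e2.
    destruct (Req_dec t t') as [Ht|Ht].
    + subst t'. rewrite E1 in E2. apply add_cancel_r in E2. subst u'.
      rewrite (Q1 _ _ _ Ha Ha'). reflexivity.
    + exfalso. set (d := t - t').
      assert (Ed : vadd u (rs d y) = u').
      { rewrite E1 in E2. replace t with (d + t') in E2 by (unfold d; ring).
        rewrite rs_add, vaddA in E2. apply add_cancel_r in E2. exact E2. }
      assert (Hd : d <> 0) by (unfold d; lra).
      apply (Hy (/ d * (a' + - a))).
      assert (Ey : rs (/ d) (vsub u' u) = y).
      { rewrite <- Ed, sub_add_l, rs_mul, Rinv_l, rs1; auto. }
      rewrite <- Ey. apply Q4. apply Q3; auto.
  - exists x0, (vnorm x0), 0. split; auto. rewrite rs0, vadd0. f_equal; ring.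
  - intros w e v b [u [a [t [Ha E1]]]] [u' [a' [t' [Ha' E2]]]].
    injection E1 as E1 F1. injection E2 as E2 F2. subst.
    exists (vadd u u'), (a + a'), (t + t'). split; auto.
    rewrite rs_add, vaddACA. f_equal. ring.
  - intros r w e [u [a [t [Ha E1]]]]. injection E1 as E1 F1. subst.
    exists (rs r u), (r * a), (r * t). split; auto.
    rewrite rs_addr, rs_mul. f_equal. ring.
  - intros w e [u [a [t [Ha E1]]]]. injection E1 as E1 F1. subst.
    destruct (Rtotal_order t 0) as [Hn|[Hz|Hp]].
    + set (s := - t). assert (Hs : 0 < s) by (unfold s; lra).
      pose proof (c_ge _ _ (Q4 (/ s) _ _ Ha)).
      assert (E : rs s (vsub (rs (/ s) u) y) = vadd u (rs t y)).
      { rewrite rs_sub, rs_mul, Rinv_r, rs1 by lra. unfold vsub. f_equal.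
        replace t with (- s) by (unfold s; ring). rewrite rs_opp. reflexivity. }
      rewrite <- E, rs_norm, Rabs_right by lra.
      apply Rmult_le_compat_l with (r := s) in H; [|lra].
      replace (s * (/ s * a - vnorm (vsub (rs (/ s) u) y))) with
        (a - s * vnorm (vsub (rs (/ s) u) y)) in H by (field; lra).
      replace t with (- s) by (unfold s; ring). lra.
    + subst. rewrite rs0, vadd0. replace (a + 0 * c) with a by ring. auto.
    + pose proof (c_le _ _ (Q4 (/ t) _ _ Ha)).
      assert (E : rs t (vadd (rs (/ t) u) y) = vadd u (rs t y)).
      { rewrite rs_addr, rs_mul, Rinv_r, rs1 by lra. reflexivity. }
      rewrite <- E, rs_norm, Rabs_right by lra.
      apply Rmult_le_compat_l with (r := t) in H; [|lra].
      replace (t * (vnorm (vadd (rs (/ t) u) y) - / t * a)) with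
        (t * vnorm (vadd (rs (/ t) u) y) - a) in H by (field; lra). lra.
  - split.
    + intros [u a] Ha. exists u, a, 0. split; auto. rewrite rs0, vadd0. f_equal; ring.
    + intro Hs. apply (Hy c). apply Hs. exists (vzero X), 0, 1. split; auto.
      rewrite rs1, add0l. f_equal; ring.
Qed.

Lemma graph_max {k} (X : BanachSpace k) x0 : x0 <> vzero X ->
  exists A, graphQ X x0 A /\ forall y, exists c, A (y, c).
Proof.
  intro Hx0.
  destruct (@classical_sets.Zorn_bigcup _ (graphP X x0) (graph_chain X x0)) as [A [PA Amax]].
  assert (QA : graphQ X x0 A).
  { destruct PA as [Q|E]; auto. exfalso.
    set (G0 := fun p : X * R => exists r, p = (rs r x0, r * vnorm x0)).
    apply (Amax G0).
    - split. intros p Hp. exfalso; eapply E; eauto.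
      intro H. apply (E (x0, vnorm x0)). apply H. exists 1. rewrite rs1. f_equal; ring.
    - left. split; [|split; [|split; [|split]]].
      + intros u a b [r Er] [s Es]. injection Er as E1 E2. injection Es as E3 E4. subst.
        assert (r = s).
        { assert (H0 : vnorm (rs (r - s) x0) = 0).
          { unfold Rminus. rewrite rs_add, rs_opp, E3. rewrite vaddN. apply norm0. }
          rewrite rs_norm in H0. pose proof (norm_pos0 x0 Hx0).
          destruct (Req_dec (r - s) 0). lra. exfalso.
          assert (Rabs (r - s) > 0) by (apply Rabs_pos_lt; auto). nra. }
        subst; reflexivity.
      + exists 1. rewrite rs1. f_equal; ring.
      + intros u a v b [r Er] [s Es]. injection Er as E1 E2. injection Es as E3 E4. subst.
        exists (r + s). rewrite rs_add. f_equal; ring.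
      + intros t u a [r Er]. injection Er as E1 E2. subst. exists (t * r). rewrite rs_mul. f_equal; ring.
      + intros u a [r Er]. injection Er as E1 E2. subst. rewrite rs_norm.
        pose proof (norm_ge0 x0). pose proof (Rle_abs r). nra. }
  exists A. split; auto. intro y. apply NNPP. intro Hn.
  destruct (graph_extend X x0 A y QA) as [A' [QA' PAA']].
  { intros c Hc. apply Hn. eauto. }
  apply (Amax A' PAA'). left; auto.
Qed.

Lemma HB_real {k} (X : BanachSpace k) (x0 : X) : x0 <> vzero X ->
  exists g : X -> R, (forall a b, g (vadd a b) = g a + g b) /\
    (forall r a, g (rs r a) = r * g a) /\ g x0 = vnorm x0 /\ (forall z, g z <= vnorm z).
Proof.
  intro Hx0. destruct (graph_max X x0 Hx0) as [A [[Q1 [Q2 [Q3 [Q4 Q5]]]] Htot]].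
  set (g := fun y => proj1_sig (constructive_indefinite_description _ (Htot y))).
  assert (Hg : forall y, A (y, g y)).
  { intro y. unfold g. destruct constructive_indefinite_description; simpl; auto. }
  exists g. split; [|split; [|split]].
  - intros a b. apply (Q1 (vadd a b)); auto.
  - intros r a. apply (Q1 (rs r a)); auto.
  - apply (Q1 x0); auto.
  - intro z. apply Q5; auto.
Qed.

Lemma cdecomp (X : BanachSpace ComplexK) (c d : R) (z : X) :
  @vscal ComplexK X (mkC c d) z = vadd (rs c z) (rs d (@vscal ComplexK X (mkC 0 1) z)).
Proof. unfold rs. rewrite (vscalA (sofR ComplexK d) (mkC 0 1) z), <- vscalDl.
  f_equal. simpl. unfold Cadd, Cmul; simpl. f_equal; ring. Qed.

Lemma g_opp {k} {X : BanachSpace k} (g : X -> R) :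
  (forall r a, g (rs r a) = r * g a) -> forall a, g (vopp a) = - g a.
Proof. intros H a. rewrite <- (rs1 a), <- rs_opp, H, rs1. ring. Qed.

Lemma HB_scal {k} (X : BanachSpace k) (x0 : X) : x0 <> vzero X ->
  exists f : X -> Scal k, is_linear_functional X f /\
    (forall z, sabs k (f z) <= vnorm z) /\ f x0 = sofR k (vnorm x0).
Proof.
  revert X x0. destruct k; intros X x0 Hx0;
  destruct (HB_real X x0 Hx0) as [g [gadd [gscal [gx0 gle]]]].
  - exists g. split; [split|split].
    + exact gadd.
    + intros a x. exact (gscal a x).
    + intro z. simpl. apply Rabs_le. split.
      * pose proof (gle (vopp z)). rewrite g_opp, norm_opp in H; auto. lra.
      * apply gle.
    + exact gx0.
  - set (i := (mkC 0 1 : Scal ComplexK)).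
    set (f := fun z : X => mkC (g z) (- g (vscal i z))).
    assert (fscal : forall a x, f (vscal a x) = Cmul a (f x)).
    { intros [a b] x. unfold f. rewrite (vscalA i).
      replace (smul ComplexK i (mkC a b)) with (mkC (0 * a - 1 * b) (0 * b + 1 * a) : Scal ComplexK)
        by (unfold i; reflexivity).
      rewrite (cdecomp X a b x), (cdecomp X (0 * a - 1 * b) (0 * b + 1 * a) x), !gadd, !gscal.
      fold i. unfold Cmul; simpl. f_equal; ring. }
    assert (fbound : forall z, Cabs (f z) <= vnorm z).
    { intro z. destruct (f z) as [p q] eqn:Ef.
      set (r := Cabs (mkC p q)).
      assert (r2 : r * r = p^2 + q^2).
      { unfold r, Cabs; simpl. apply sqrt_sqrt. nra. }
      destruct (Req_dec r 0) as [Hr|Hr]. rewrite Hr. apply norm_ge0.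
      assert (rpos : 0 < r).
      { pose proof (sabs_ge0 ComplexK (mkC p q)) as H0. simpl in H0. fold r in H0. destruct H0; auto. exfalso; apply Hr; auto. }
      set (b := (mkC (p / r) (- q / r) : Scal ComplexK)).
      assert (Hb : Cabs b = 1).
      { unfold b, Cabs. cbn [cre cim]. transitivity (sqrt 1); [|apply sqrt_1]. f_equal.
        replace ((p / r) ^ 2 + (- q / r) ^ 2) with ((p^2+q^2)/(r*r)) by (field; lra).
        rewrite <- r2. field. lra. }
      pose proof (gle (vscal b z)).
      assert (g (vscal b z) = r).
      { change (g (vscal b z)) with (cre (f (vscal b z))). rewrite fscal, Ef.
        unfold b, Cmul; simpl. simpl in r2. field_simplify; [|lra].
        replace (p^2 + q^2) with (r * r) by (simpl; lra). field. lra. }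
      rewrite vnormZ in H. simpl in H. rewrite Hb in H. fold r. lra. }
    exists f. split; [split|split].
    + intros a b. unfold f. simpl. unfold Cadd. rewrite vscalDr, !gadd. simpl. f_equal. ring.
    + exact fscal.
    + exact fbound.
    + pose proof (fbound x0) as H. unfold f in H |- *. rewrite gx0 in *.
      unfold Cabs in H; cbn [cre cim] in H.
      set (q := g (vscal i x0)) in *. pose proof (norm_ge0 x0).
      set (sq := sqrt (vnorm x0 ^ 2 + (- q) ^ 2)) in H.
      assert (E2 : sq * sq = vnorm x0 ^ 2 + (- q) ^ 2) by (apply sqrt_sqrt; nra).
      assert (0 <= sq) by apply sqrt_pos.
      assert (Hq : q * q <= 0) by nra.
      assert (q = 0) by nra.
      rewrite H2. simpl. f_equal. ring.
Qed.

Lemma smul_addr k c a b : smul k c (sadd k a b) = sadd k (smul k c a) (smul k c b).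
Proof. destruct k; simpl. ring. unfold Cmul, Cadd; simpl. f_equal; ring. Qed.

Lemma smul_swap k a b z : smul k a (smul k b z) = smul k b (smul k a z).
Proof. destruct k; simpl. ring. unfold Cmul; simpl. f_equal; ring. Qed.

Lemma sRe_opp1 k z : sRe k (smul k (sopp k (s1 k)) z) = - sRe k z.
Proof. destruct k; simpl. ring. ring. Qed.

Lemma lin_scal {k} {X : BanachSpace k} f : is_linear_functional X f ->
  forall a x, f (vscal a x) = smul k a (f x).
Proof. intros [_ H]; exact H. Qed.

Lemma lin_add {k} {X : BanachSpace k} f : is_linear_functional X f ->
  forall a b, f (vadd a b) = sadd k (f a) (f b).
Proof. intros [H _]; exact H. Qed.

Lemma lin_Re_add {k} {X : BanachSpace k} f : is_linear_functional X f ->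
  forall a b, sRe k (f (vadd a b)) = sRe k (f a) + sRe k (f b).
Proof. intros H a b. rewrite (lin_add f H), sRe_add. reflexivity. Qed.

Lemma lin_Re_rs {k} {X : BanachSpace k} f : is_linear_functional X f ->
  forall r a, sRe k (f (rs r a)) = r * sRe k (f a).
Proof. intros H r a. unfold rs. rewrite (lin_scal f H), sRe_mull. reflexivity. Qed.

Lemma lin_Re_opp {k} {X : BanachSpace k} f : is_linear_functional X f ->
  forall a, sRe k (f (vopp a)) = - sRe k (f a).
Proof. intros H a. rewrite vopp_scal, (lin_scal f H), sRe_opp1. reflexivity. Qed.

Lemma lin_Re_sub {k} {X : BanachSpace k} f : is_linear_functional X f ->
  forall a b, sRe k (f (vsub a b)) = sRe k (f a) - sRe k (f b).
Proof. intros H a b. unfold vsub. rewrite (lin_Re_add f H), (lin_Re_opp f H). ring. Qed.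

Lemma lin_zero {k} {X : BanachSpace k} f : is_linear_functional X f -> sabs k (f (vzero X)) = 0.
Proof. intro H. rewrite <- (vscal_s0 (vzero X)), (lin_scal f H), sabs_mul, sabs_s0. ring. Qed.

Lemma D_exists {k} (X : BanachSpace k) (u : X) : u <> vzero X -> exists f, Dset X u f.
Proof.
  intro Hu. destruct (HB_scal X u Hu) as [f [Hlin [Hb Hfu]]].
  set (c := vnorm u). assert (cpos : 0 < c) by (apply norm_pos0; auto).
  set (F := fun z => smul k (sofR k c) (f z)).
  assert (FLin : is_linear_functional X F).
  { split.
    - intros a b. unfold F. rewrite (lin_add f Hlin). apply smul_addr.
    - intros a x. unfold F. rewrite (lin_scal f Hlin). apply smul_swap. }
  assert (Fb : forall z, sabs k (F z) <= c * vnorm z).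
  { intro z. unfold F. rewrite sabs_mul, sabs_sofR, Rabs_right by lra.
    apply Rmult_le_compat_l; [lra|auto]. }
  assert (Fu : F u = sofR k (c * c)).
  { unfold F. rewrite Hfu. apply smul_sofR. }
  assert (Dn : dual_norm X F = c).
  { apply Rsup_lub. split.
    - intros r [x [Hx ->]]. pose proof (Fb x). pose proof (norm_ge0 x). nra.
    - intros b Hb'. apply Hb'. exists (rs (/ c) u). split.
      + rewrite rs_norm, Rabs_right. fold c. right. field. lra.
        left. apply Rinv_0_lt_compat. lra.
      + unfold rs. rewrite (lin_scal F FLin), Fu, smul_sofR, sabs_sofR.
        rewrite Rabs_right. field. lra.
        replace (/ c * (c * c)) with c by (field; lra). lra. }
  exists F. split; [split; [auto|exists c; auto]|split].
  - rewrite Dn. exact Fu.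
  - rewrite Dn. fold c. simpl. ring.
Qed.

Lemma D_bound {k} (X : BanachSpace k) (u : X) f : Dset X u f -> u <> vzero X ->
  is_linear_functional X f /\ (forall v, sabs k (f v) <= vnorm u * vnorm v) /\
  f u = sofR k (vnorm u ^ 2).
Proof.
  intros [[Hlin [M HM]] [Hfu Hdn]] Hu.
  assert (upos : 0 < vnorm u) by (apply norm_pos0; auto).
  assert (Dn : dual_norm X f = vnorm u).
  { simpl in Hdn. apply (Rmult_eq_reg_r (vnorm u)); [|lra]. rewrite Hdn. ring. }
  split; [auto|split].
  - assert (HL : is_lub (fun r => exists x : X, vnorm x <= 1 /\ r = sabs k (f x)) (dual_norm X f)).
    { apply Rsup_spec.
      - exists (sabs k (f (vzero X))). exists (vzero X). split; auto. rewrite norm0. lra.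
      - exists (Rabs M). intros r [x [Hx ->]]. pose proof (HM x). pose proof (norm_ge0 x).
        pose proof (Rle_abs M). pose proof (Rabs_pos M). nra. }
    rewrite Dn in HL. intro v.
    destruct (norm_ge0 v) as [Hv|Hv].
    + set (v1 := rs (/ vnorm v) v).
      assert (N1 : vnorm v1 = 1).
      { unfold v1. rewrite rs_norm, Rabs_right. field. lra. left. apply Rinv_0_lt_compat; lra. }
      assert (sabs k (f v1) <= vnorm u) by (apply (lub_le _ _ _ HL); exists v1; split; [lra|auto]).
      unfold v1, rs in H. rewrite (lin_scal f Hlin), sabs_mul, sabs_sofR, Rabs_right in H.
      2:{ left. apply Rinv_0_lt_compat; lra. }
      apply Rmult_le_compat_l with (r := vnorm v) in H; [|lra].
      replace (vnorm v * (/ vnorm v * sabs k (f v))) with (sabs k (f v)) in H by (field; lra). lra.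
    + symmetry in Hv. apply vnorm_eq0 in Hv. subst v. rewrite lin_zero, norm0; auto. lra.
  - rewrite Hfu, Hdn. reflexivity.
Qed.

Definition Lipb {k} {X : BanachSpace k} (A : X -> X) (c : R) :=
  forall x y : X, vnorm (vsub (A x) (A y)) <= c * vnorm (vsub x y).

Definition ratioset {k} (X : BanachSpace k) (A : X -> X) :=
  fun r => exists x y : X, x <> y /\ r = vnorm (vsub (A x) (A y)) / vnorm (vsub x y).

Lemma nontriv_pair {k} (X : BanachSpace k) : (exists x : X, x <> vzero X) ->
  exists x y : X, x <> y.
Proof. intros [x Hx]. exists x, (vzero X). auto. Qed.

Lemma lip_lub {k} (X : BanachSpace k) (hX : exists x : X, x <> vzero X) A c :
  Lipb A c -> is_lub (ratioset X A) (lipnorm X A).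
Proof. intro H. apply Rsup_spec.
  - destruct (nontriv_pair X hX) as [x [y Hxy]]. eexists. exists x, y. split; eauto.
  - exists c. intros r [x [y [Hxy ->]]]. pose proof (norm_pos x y Hxy).
    apply (Rmult_le_reg_r (vnorm (vsub x y))); auto. unfold Rdiv.
    rewrite Rmult_assoc, Rinv_l by lra. rewrite Rmult_1_r. apply H. Qed.

Lemma lip_bound {k} (X : BanachSpace k) (hX : exists x : X, x <> vzero X) A c :
  Lipb A c -> Lipb A (lipnorm X A).
Proof. intros H x y. destruct (classic (x = y)) as [->|Hxy].
  - rewrite !subxx, norm0. lra.
  - pose proof (norm_pos x y Hxy).
    assert (vnorm (vsub (A x) (A y)) / vnorm (vsub x y) <= lipnorm X A).
    { apply (lub_le _ _ _ (lip_lub X hX A c H)). exists x, y. auto. }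
    apply Rmult_le_compat_r with (r := vnorm (vsub x y)) in H1; [|lra].
    unfold Rdiv in H1. rewrite Rmult_assoc, Rinv_l, Rmult_1_r in H1 by lra. lra. Qed.

Lemma lip_least {k} (X : BanachSpace k) (hX : exists x : X, x <> vzero X) A c d :
  Lipb A c -> Lipb A d -> lipnorm X A <= d.
Proof. intros H Hd. apply (lub_least _ _ _ (lip_lub X hX A c H)).
  intros r [x [y [Hxy ->]]]. pose proof (norm_pos x y Hxy).
  apply (Rmult_le_reg_r (vnorm (vsub x y))); auto. unfold Rdiv.
  rewrite Rmult_assoc, Rinv_l by lra. rewrite Rmult_1_r. apply Hd. Qed.

Lemma lip_approx {k} (X : BanachSpace k) (hX : exists x : X, x <> vzero X) A c eps :
  Lipb A c -> 0 < eps -> exists x y, x <> y /\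
    (lipnorm X A - eps) * vnorm (vsub x y) < vnorm (vsub (A x) (A y)).
Proof. intros H He. destruct (lub_approx _ _ eps (lip_lub X hX A c H) He) as [r [[x [y [Hxy ->]]] Hr]].
  exists x, y. split; auto. pose proof (norm_pos x y Hxy).
  apply Rmult_lt_compat_r with (r := vnorm (vsub x y)) in Hr; auto.
  unfold Rdiv in Hr. rewrite Rmult_assoc, Rinv_l, Rmult_1_r in Hr by lra. exact Hr. Qed.

Lemma lip_ge0 {k} (X : BanachSpace k) (hX : exists x : X, x <> vzero X) A c :
  Lipb A c -> 0 <= lipnorm X A.
Proof. intro H. destruct (nontriv_pair X hX) as [x [y Hxy]].
  apply Rle_trans with (vnorm (vsub (A x) (A y)) / vnorm (vsub x y)).
  - pose proof (norm_pos x y Hxy). pose proof (norm_ge0 (vsub (A x) (A y))).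
    unfold Rdiv. apply Rmult_le_pos; auto. left. apply Rinv_0_lt_compat; auto.
  - apply (lub_le _ _ _ (lip_lub X hX A c H)). exists x, y. auto. Qed.

Lemma Lip0_b {k} (X : BanachSpace k) T : Lip0 X T -> exists c, Lipb T c.
Proof. intros [_ [c H]]. exists c. exact H. Qed.

Lemma sub_IplusT {k} {X : BanachSpace k} a (x y p q : X) :
  vsub (vadd x (vscal a p)) (vadd y (vscal a q)) = vadd (vsub x y) (vscal a (vsub p q)).
Proof. rewrite sub_add_add, scal_sub. reflexivity. Qed.

Lemma IplusT_Lipb {k} (X : BanachSpace k) a T c : Lipb T c ->
  Lipb (IplusT X a T) (1 + sabs k a * c).
Proof. intros H x y. unfold IplusT. rewrite sub_IplusT.
  eapply Rle_trans; [apply vnorm_tri|]. rewrite vnormZ.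
  pose proof (H x y). pose proof (sabs_ge0 k a).
  assert (sabs k a * vnorm (vsub (T x) (T y)) <= sabs k a * (c * vnorm (vsub x y))) by
    (apply Rmult_le_compat_l; auto). lra. Qed.

Lemma W_elem {k} (X : BanachSpace k) (hX : exists x : X, x <> vzero X) T l :
  Lip0 X T -> Wset X T l ->
  sRe k l <= lipnorm X T /\ sabs k l <= lipnorm X T /\ - lipnorm X T <= sRe k l.
Proof.
  intros HT [x [y [f [Hxy [HD ->]]]]].
  destruct (Lip0_b X T HT) as [c Hc]. pose proof (lip_bound X hX T c Hc x y) as HL.
  assert (Hu : vsub x y <> vzero X) by (intro E; apply Hxy; apply sub_eq0; auto).
  destruct (D_bound X _ f HD Hu) as [Hlin [Hb Hfu]].
  pose proof (norm_pos x y Hxy) as Np.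
  assert (A : sabs k (smul k (f (vsub (T x) (T y))) (sofR k (/ vnorm (vsub x y) ^ 2))) <= lipnorm X T).
  { rewrite sabs_mul, sabs_sofR, Rabs_right.
    2:{ left. apply Rinv_0_lt_compat. apply pow_lt. auto. }
    pose proof (Hb (vsub (T x) (T y))).
    set (n := vnorm (vsub x y)) in *.
    set (L := lipnorm X T) in *.
    assert (sabs k (f (vsub (T x) (T y))) <= n * (L * n)).
    { eapply Rle_trans; [exact H|]. apply Rmult_le_compat_l; lra. }
    apply Rmult_le_compat_r with (r := / n ^ 2) in H0.
    2:{ left. apply Rinv_0_lt_compat. apply pow_lt. auto. }
    replace (n * (L * n) * / n ^ 2) with L in H0 by (field; lra). exact H0. }
  pose proof (sRe_le_abs k (smul k (f (vsub (T x) (T y))) (sofR k (/ vnorm (vsub x y) ^ 2)))).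
  pose proof (sRe_ge_mabs k (smul k (f (vsub (T x) (T y))) (sofR k (/ vnorm (vsub x y) ^ 2)))).
  split; [|split]; lra.
Qed.

Lemma W_nonempty {k} (X : BanachSpace k) (hX : exists x : X, x <> vzero X) T :
  exists l, Wset X T l.
Proof. destruct hX as [x Hx].
  assert (Hu : vsub x (vzero X) <> vzero X) by (intro E; apply Hx; apply sub_eq0; auto).
  destruct (D_exists X _ Hu) as [f Hf].
  eexists. exists x, (vzero X), f. split; [auto|split; [exact Hf|reflexivity]]. Qed.

Lemma supReW_lub {k} (X : BanachSpace k) (hX : exists x : X, x <> vzero X) T : Lip0 X T ->
  is_lub (fun r => exists l, Wset X T l /\ r = sRe k l) (supReW X T).
Proof. intro HT. apply Rsup_spec.
  - destruct (W_nonempty X hX T) as [l Hl]. eauto.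
  - exists (lipnorm X T). intros r [l [Hl ->]]. apply (W_elem X hX T l HT Hl). Qed.

Lemma omega_lub {k} (X : BanachSpace k) (hX : exists x : X, x <> vzero X) T : Lip0 X T ->
  is_lub (fun r => exists l, Wset X T l /\ r = sabs k l) (omega X T).
Proof. intro HT. apply Rsup_spec.
  - destruct (W_nonempty X hX T) as [l Hl]. eauto.
  - exists (lipnorm X T). intros r [l [Hl ->]]. apply (W_elem X hX T l HT Hl). Qed.

Lemma smul_s1 k z : smul k (s1 k) z = z.
Proof. destruct k; simpl. ring. destruct z; unfold Cmul; simpl; f_equal; ring. Qed.

Lemma I1 {k} (X : BanachSpace k) T : (fun x => vadd x (T x)) = IplusT X (s1 k) T.
Proof. apply functional_extensionality. intro x. unfold IplusT. rewrite vscal1. reflexivity. Qed.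

Lemma G1 {k} (X : BanachSpace k) (hX : exists x : X, x <> vzero X) T a l :
  Lip0 X T -> Wset X T l -> 1 + sRe k (smul k a l) <= lipnorm X (IplusT X a T).
Proof.
  intros HT [x [y [f [Hxy [HD ->]]]]].
  destruct (Lip0_b X T HT) as [c Hc].
  pose proof (lip_bound X hX _ _ (IplusT_Lipb X a T c Hc) x y) as HB.
  unfold IplusT in HB. rewrite sub_IplusT in HB.
  assert (Hu : vsub x y <> vzero X) by (intro E; apply Hxy; apply sub_eq0; auto).
  destruct (D_bound X _ f HD Hu) as [Hlin [Hb Hfu]].
  pose proof (norm_pos x y Hxy) as Np.
  set (u := vsub x y) in *. set (w := vsub (T x) (T y)) in *. set (n := vnorm u) in *.
  rewrite smul_assoc_sofR.
  assert (E : sRe k (f (vadd u (vscal a w))) = n ^ 2 + sRe k (smul k a (f w))).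
  { rewrite (lin_add f Hlin), sRe_add, Hfu, sRe_sofR, (lin_scal f Hlin). reflexivity. }
  pose proof (sRe_le_abs k (f (vadd u (vscal a w)))).
  pose proof (Hb (vadd u (vscal a w))).
  set (Lp := lipnorm X (fun x0 : X => vadd x0 (vscal a (T x0)))) in *.
  set (R1 := sRe k (smul k a (f w))) in *.
  assert (n ^ 2 + R1 <= n * (Lp * n)).
  { rewrite <- E. eapply Rle_trans; [eassumption|]. eapply Rle_trans; [eassumption|].
    apply Rmult_le_compat_l; lra. }
  assert (R1 * / n ^ 2 <= Lp - 1).
  { apply (Rmult_le_reg_r (n ^ 2)). apply pow_lt; auto.
    replace (R1 * / n ^ 2 * n ^ 2) with R1 by (field; lra). simpl in *. nra. }
  unfold IplusT. fold Lp. lra.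
Qed.

Lemma W_ge {k} (X : BanachSpace k) (hX : exists x : X, x <> vzero X) T : Lip0 X T ->
  - lipnorm X T <= supReW X T /\ supReW X T <= lipnorm X T.
Proof. intro HT. pose proof (supReW_lub X hX T HT) as HL. split.
  - destruct (W_nonempty X hX T) as [l Hl].
    apply Rle_trans with (sRe k l). apply (W_elem X hX T l HT Hl).
    apply (lub_le _ _ _ HL). eauto.
  - apply (lub_least _ _ _ HL). intros r [l [Hl ->]]. apply (W_elem X hX T l HT Hl). Qed.

Lemma choose_s L M : - L <= M -> M < L ->
  exists s eps, 0 < s <= 1 /\ 0 < eps /\ 0 < 1 - s * M /\ 0 < 1 + s * (L - eps) /\
    1 + s ^ 2 * L ^ 2 <= (1 + s * (L - eps)) * (1 - s * M).
Proof. intros H1 H2.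
  set (g := L - M). set (s := g / (4 * (L ^ 2 + 1))).
  assert (Lp : 0 < L) by lra. assert (gp : 0 < g) by (unfold g; lra).
  assert (g2 : g <= 2 * L) by (unfold g; lra).
  assert (Dp : 0 < 4 * (L^2 + 1)) by nra.
  assert (sp : 0 < s) by (unfold s; apply Rdiv_lt_0_compat; lra).
  assert (sD : s * (4 * (L^2 + 1)) = g) by (unfold s; field; nra).
  assert (sL : s * L <= 1 / 2).
  { assert (E1 : s * L * (4 * (L^2 + 1)) = g * L) by (rewrite <- sD; ring).
    assert (g * L <= 2 * L * L) by (apply Rmult_le_compat_r; lra).
    assert (s * L * (4 * (L^2 + 1)) <= 1/2 * (4 * (L^2 + 1))) by (simpl in *; nra).
    apply Rmult_le_reg_r in H0; lra. }
  assert (s1 : s <= 1 / 4).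
  { assert (2 * L <= L^2 + 1) by (pose proof (pow2_ge_0 (L - 1)); simpl in *; nra).
    assert (s * (4 * (L^2 + 1)) <= 1/4 * (4 * (L^2 + 1))) by lra.
    apply Rmult_le_reg_r in H0; lra. }
  exists s, (g / 2). split; [lra|split; [lra|split; [|split]]].
  - assert (s * M <= s * L) by (apply Rmult_le_compat_l; lra). lra.
  - assert (0 <= s * (L - g / 2)) by (apply Rmult_le_pos; unfold g in *; lra). lra.
  - assert (E : (1 + s * (L - g / 2)) * (1 - s * M) - (1 + s ^ 2 * L ^ 2)
               = s * (g / 2 - s * ((L - g/2) * M + L ^ 2)))  by (unfold g; field).
    assert (B1 : (L - g/2) * M <= L * L).
    { assert (0 <= L - g/2 <= L) by (unfold g; lra).
      assert (Rabs M <= L) by (apply Rabs_le; lra).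
      assert ((L - g/2) * M <= (L - g/2) * Rabs M) by (apply Rmult_le_compat_l; [lra|apply Rle_abs]).
      assert ((L - g/2) * Rabs M <= L * L) by (apply Rmult_le_compat; try lra; apply Rabs_pos).
      lra. }
    assert (B2 : s * ((L - g/2) * M + L ^ 2) <= g / 2).
    { assert (s * ((L - g/2) * M + L ^ 2) <= s * (2 * L ^ 2)) by (apply Rmult_le_compat_l; simpl; lra).
      nra. }
    assert (0 <= s * (g / 2 - s * ((L - g/2) * M + L ^ 2))) by (apply Rmult_le_pos; lra).
    lra.
Qed.

Lemma vadd_sub_chain {k} {X : BanachSpace k} (p q r : X) : vadd (vsub p q) (vsub q r) = vsub p r.
Proof. unfold vsub. rewrite <- vaddA, (vaddA (vopp q)), addNl, add0l. reflexivity. Qed.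

Lemma partA_easy {k} (X : BanachSpace k) (hX : exists x : X, x <> vzero X) T :
  Lip0 X T -> supReW X T = lipnorm X T -> lipnorm X (IplusT X (s1 k) T) = 1 + lipnorm X T.
Proof.
  intros HT HM. destruct (Lip0_b X T HT) as [c Hc].
  pose proof (lip_bound X hX T c Hc) as HL.
  apply Rle_antisym.
  - apply (lip_least X hX _ _ _ (IplusT_Lipb X (s1 k) T c Hc)).
    intros x y. unfold IplusT. rewrite sub_IplusT, vscal1.
    eapply Rle_trans; [apply vnorm_tri|]. pose proof (HL x y). lra.
  - apply le_epsilon. intros eps He.
    destruct (lub_approx _ _ eps (supReW_lub X hX T HT) He) as [r [[l [Hl ->]] Hr]].
    pose proof (G1 X hX T (s1 k) l HT Hl). rewrite smul_s1 in H. lra.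
Qed.

Lemma partA_hard {k} (X : BanachSpace k) (hX : exists x : X, x <> vzero X) T :
  Lip0 X T -> lipnorm X (IplusT X (s1 k) T) = 1 + lipnorm X T -> supReW X T = lipnorm X T.
Proof.
  intros HT HA. destruct (Lip0_b X T HT) as [c Hc].
  pose proof (lip_bound X hX T c Hc) as HL.
  set (L := lipnorm X T) in *. set (M := supReW X T).
  destruct (W_ge X hX T HT) as [HM1 HM2]. fold L M in HM1, HM2.
  destruct HM2 as [Hlt|Heq]; [exfalso|exact Heq].
  destruct (choose_s L M HM1 Hlt) as [s [eps [[s0 s1'] [e0 [c1 [c2 c3]]]]]].
  assert (se : 0 < s * eps) by (apply Rmult_lt_0_compat; lra).
  destruct (lip_approx X hX _ _ (s * eps) (IplusT_Lipb X (s1 k) T c Hc) se) as [z [z' [Hzz Happ]]].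
  rewrite HA in Happ. unfold IplusT in Happ. rewrite sub_IplusT, vscal1 in Happ.
  set (u := vsub z z') in *. set (w := vsub (T z) (T z')) in *.
  set (a := vnorm u) in *.
  assert (ap : 0 < a) by (apply norm_pos; auto).
  assert (Nw : vnorm w <= L * a) by apply HL.
  set (u' := vadd u (rs s w)).
  assert (Eu : vadd u w = vadd u' (rs (1 - s) w)).
  { unfold u'. rewrite <- vaddA, <- rs_add. replace (s + (1 - s)) with 1 by ring. rewrite rs1. reflexivity. }
  set (b := vnorm u').
  assert (bgt : (1 + s * (L - eps)) * a < b).
  { pose proof (vnorm_tri u' (rs (1 - s) w)). rewrite <- Eu, rs_norm, Rabs_right in H by lra.
    assert ((1 - s) * vnorm w <= (1 - s) * (L * a)) by (apply Rmult_le_compat_l; lra).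
    fold b in H. nra. }
  assert (bp : 0 < b) by nra.
  set (y' := vsub z' (rs s w)).
  assert (Ezy : vsub z y' = u') by (unfold y', u'; rewrite sub_sub_r; reflexivity).
  assert (Hu' : u' <> vzero X) by (intro E; unfold b in bp; rewrite E, norm0 in bp; lra).
  assert (Hzy : z <> y') by (intro E; apply Hu'; rewrite <- Ezy, E; apply subxx).
  destruct (D_exists X u' Hu') as [f HD].
  destruct (D_bound X u' f HD Hu') as [Hlin [Hb Hfu]]. fold b in Hb, Hfu.
  set (w' := vsub (T z) (T y')).
  assert (Wl : Wset X T (smul k (f w') (sofR k (/ b ^ 2)))).
  { exists z, y', f. split; [auto|split].
    - rewrite Ezy. exact HD.
    - rewrite Ezy. reflexivity. }
  assert (ReM : sRe k (f w') * / b ^ 2 <= M).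
  { rewrite <- sRe_mulr. apply (lub_le _ _ _ (supReW_lub X hX T HT)). eauto. }
  assert (Ref : b ^ 2 = sRe k (f u) + s * sRe k (f w)).
  { rewrite <- (sRe_sofR k (b ^ 2)), <- Hfu. unfold u'.
    rewrite (lin_Re_add f Hlin), (lin_Re_rs f Hlin). reflexivity. }
  assert (Rfu : sRe k (f u) <= b * a).
  { eapply Rle_trans; [apply sRe_le_abs|]. apply Hb. }
  assert (Ew' : w' = vadd w (vsub (T z') (T y'))) by (unfold w', w; rewrite vadd_sub_chain; reflexivity).
  assert (Ezz : vsub z' y' = rs s w).
  { unfold y'. rewrite sub_sub_r, subxx, add0l. reflexivity. }
  assert (Rfw' : sRe k (f w) - b * (L * (s * (L * a))) <= sRe k (f w')).
  { rewrite Ew', (lin_Re_add f Hlin).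
    pose proof (sRe_ge_mabs k (f (vsub (T z') (T y')))).
    pose proof (Hb (vsub (T z') (T y'))).
    pose proof (HL z' y'). rewrite Ezz, rs_norm, Rabs_right in H1 by lra.
    assert (vnorm (vsub (T z') (T y')) <= L * (s * (L * a))).
    { eapply Rle_trans; [exact H1|]. apply Rmult_le_compat_l.
      apply (lip_ge0 X hX T c Hc). apply Rmult_le_compat_l; lra. }
    assert (b * vnorm (vsub (T z') (T y')) <= b * (L * (s * (L * a)))) by (apply Rmult_le_compat_l; lra).
    lra. }
  assert (b2 : 0 < b ^ 2) by (apply pow_lt; auto).
  assert (Hw'M : sRe k (f w') <= M * b ^ 2).
  { apply Rmult_le_compat_r with (r := b ^ 2) in ReM; [|lra].
    replace (sRe k (f w') * / b ^ 2 * b ^ 2) with (sRe k (f w')) in ReM by (field; lra). exact ReM. }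
  assert (K1 : b ^ 2 - b * a - s ^ 2 * L ^ 2 * a * b <= s * M * b ^ 2).
  { assert (s * sRe k (f w') <= s * (M * b ^ 2)) by (apply Rmult_le_compat_l; lra).
    assert (s * (sRe k (f w) - b * (L * (s * (L * a)))) <= s * sRe k (f w')) by (apply Rmult_le_compat_l; lra).
    simpl in *. nra. }
  assert (K2 : b * (1 - s * M) <= a * (1 + s ^ 2 * L ^ 2)).
  { apply (Rmult_le_reg_r b); auto. simpl in *. nra. }
  assert (K3 : (1 + s * (L - eps)) * a * (1 - s * M) < b * (1 - s * M)) by (apply Rmult_lt_compat_r; lra).
  assert (K4 : a * (1 + s ^ 2 * L ^ 2) <= a * ((1 + s * (L - eps)) * (1 - s * M))) by (apply Rmult_le_compat_l; lra).
  nra.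
Qed.

Lemma partA {k} (X : BanachSpace k) (hX : exists x : X, x <> vzero X) T : Lip0 X T ->
  (lipnorm X (fun x => vadd x (T x)) = 1 + lipnorm X T <-> supReW X T = lipnorm X T).
Proof. intro HT. rewrite I1. split.
  - apply partA_hard; auto.
  - apply partA_easy; auto. Qed.

Definition scT {k} {X : BanachSpace k} (a : Scal k) (T : X -> X) : X -> X := fun x => vscal a (T x).

Lemma scT_Lip0 {k} (X : BanachSpace k) a T : Lip0 X T -> Lip0 X (scT a T).
Proof. intros [H0 [c Hc]]. split.
  - unfold scT. rewrite H0. apply vscal_z0.
  - exists (sabs k a * c). intros x y. unfold scT. rewrite <- scal_sub, vnormZ, Rmult_assoc.
    apply Rmult_le_compat_l. apply sabs_ge0. apply Hc. Qed.

Lemma scT_lipnorm {k} (X : BanachSpace k) a T : sabs k a = 1 -> lipnorm X (scT a T) = lipnorm X T.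
Proof. intro Ha. unfold lipnorm. f_equal. apply functional_extensionality. intro r.
  apply propositional_extensionality. unfold scT.
  split; intros [x [y [H E]]]; exists x, y; split; auto;
  rewrite E; rewrite <- scal_sub, vnormZ, Ha, Rmult_1_l; reflexivity. Qed.

Lemma supReW_scT_le {k} (X : BanachSpace k) (hX : exists x : X, x <> vzero X) a T :
  Lip0 X T -> sabs k a = 1 -> supReW X (scT a T) <= omega X T.
Proof. intros HT Ha.
  apply (lub_least _ _ _ (supReW_lub X hX _ (scT_Lip0 X a T HT))).
  intros r [l' [[x [y [f [Hxy [HD ->]]]]] ->]].
  assert (Hu : vsub x y <> vzero X) by (intro E; apply Hxy; apply sub_eq0; auto).
  destruct (D_bound X _ f HD Hu) as [Hlin _].
  unfold scT. rewrite <- scal_sub, (lin_scal f Hlin).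
  set (l := smul k (f (vsub (T x) (T y))) (sofR k (/ vnorm (vsub x y) ^ 2))).
  assert (Wl : Wset X T l) by (exists x, y, f; auto).
  apply Rle_trans with (sabs k l).
  - eapply Rle_trans; [apply sRe_le_abs|]. unfold l. rewrite !sabs_mul, Ha. lra.
  - apply (lub_le _ _ _ (omega_lub X hX T HT)). eauto.
Qed.

Lemma omega_le {k} (X : BanachSpace k) (hX : exists x : X, x <> vzero X) T :
  Lip0 X T -> omega X T <= lipnorm X T.
Proof. intro HT. apply (lub_least _ _ _ (omega_lub X hX T HT)).
  intros r [l [Hl ->]]. apply (W_elem X hX T l HT Hl). Qed.

Lemma omega_ge0 {k} (X : BanachSpace k) (hX : exists x : X, x <> vzero X) T :
  Lip0 X T -> 0 <= omega X T.
Proof. intro HT. destruct (W_nonempty X hX T) as [l Hl].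
  apply Rle_trans with (sabs k l). apply sabs_ge0.
  apply (lub_le _ _ _ (omega_lub X hX T HT)). eauto. Qed.

Lemma unit_rot k (l : Scal k) : exists a, sabs k a = 1 /\ sRe k (smul k a l) = sabs k l.
Proof. destruct k; simpl in *.
  - destruct (Rle_dec 0 l).
    + exists 1. rewrite Rabs_R1, Rabs_right by lra. split; auto; ring.
    + exists (- (1)). rewrite Rabs_Ropp, Rabs_R1, Rabs_left by lra. split; auto; ring.
  - destruct l as [p q].
    set (r := Cabs (mkC p q)).
    assert (r2 : r * r = p^2 + q^2).
    { unfold r, Cabs; cbn [cre cim]. apply sqrt_sqrt. nra. }
    destruct (Req_dec r 0) as [Hr|Hr].
    + exists (mkC 1 0). unfold Cabs, Cmul; cbn [cre cim]. fold r. rewrite Hr.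
      split. replace (1 ^ 2 + 0 ^ 2) with 1 by ring. apply sqrt_1.
      rewrite Hr in r2. simpl in r2. assert (p = 0) by nra. subst. ring.
    + assert (rpos : 0 < r).
      { pose proof (sabs_ge0 ComplexK (mkC p q)) as H0. simpl in H0. fold r in H0. destruct H0; auto. exfalso; apply Hr; auto. }
      exists (mkC (p / r) (- q / r)). split.
      * unfold Cabs. cbn [cre cim]. transitivity (sqrt 1); [|apply sqrt_1]. f_equal.
        replace ((p / r) ^ 2 + (- q / r) ^ 2) with ((p^2+q^2)/(r*r)) by (field; lra).
        rewrite <- r2. field. lra.
      * unfold Cmul. cbn [cre cim]. fold r. 
        replace (p / r * p - - q / r * q) with ((p^2+q^2)/r) by (field; lra).
        rewrite <- r2. field. lra.
Qed.

Lemma lip_close {k} (X : BanachSpace k) (hX : exists x : X, x <> vzero X) A B ca cb d :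
  Lipb A ca -> Lipb B cb ->
  (forall x y, vnorm (vsub (vsub (A x) (A y)) (vsub (B x) (B y))) <= d * vnorm (vsub x y)) ->
  lipnorm X A <= lipnorm X B + d.
Proof. intros HA HB Hd. apply (lip_least X hX A ca); auto.
  intros x y. pose proof (lip_bound X hX B cb HB x y). pose proof (Hd x y).
  assert (E : vsub (A x) (A y) = vadd (vsub (B x) (B y)) (vsub (vsub (A x) (A y)) (vsub (B x) (B y))))
    by (rewrite vaddC, sub_add_r; reflexivity).
  rewrite E. eapply Rle_trans; [apply vnorm_tri|]. lra. Qed.

Lemma sub_add_same {k} {X : BanachSpace k} (u p q : X) : vsub (vadd u p) (vadd u q) = vsub p q.
Proof. rewrite sub_add_add, subxx, add0l. reflexivity. Qed.

Lemma csub_scal (X : BanachSpace ComplexK) a1 a2 b1 b2 (w : X) :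
  vsub (@vscal ComplexK X (mkC a1 a2) w) (@vscal ComplexK X (mkC b1 b2) w) =
  @vscal ComplexK X (mkC (a1 - b1) (a2 - b2)) w.
Proof. unfold vsub. rewrite vopp_scal, vscalA, <- vscalDl. f_equal.
  simpl. unfold Cadd, Cmul, Copp; simpl. f_equal; ring. Qed.

Lemma Cabs_le (d1 d2 : R) : Cabs (mkC d1 d2) <= Rabs d1 + Rabs d2.
Proof. unfold Cabs; cbn [cre cim].
  rewrite <- (sqrt_pow2 (Rabs d1 + Rabs d2)).
  2:{ pose proof (Rabs_pos d1). pose proof (Rabs_pos d2). lra. }
  apply sqrt_le_1_alt. rewrite <- (pow2_abs d1), <- (pow2_abs d2).
  pose proof (Rabs_pos d1). pose proof (Rabs_pos d2). simpl. nra. Qed.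

Lemma crot_close (X : BanachSpace ComplexK) (hX : exists x : X, x <> vzero X) T a1 a2 b1 b2 :
  Lip0 X T ->
  lipnorm X (IplusT X (mkC a1 a2) T) <=
  lipnorm X (IplusT X (mkC b1 b2) T) + (Rabs (a1 - b1) + Rabs (a2 - b2)) * lipnorm X T.
Proof. intro HT. destruct (Lip0_b X T HT) as [c Hc].
  pose proof (lip_bound X hX T c Hc) as HL.
  apply (lip_close X hX _ _ _ _ _ (IplusT_Lipb X _ T c Hc) (IplusT_Lipb X _ T c Hc)).
  intros x y. unfold IplusT. rewrite !sub_IplusT, sub_add_same, csub_scal, vnormZ.
  simpl sabs. pose proof (Cabs_le (a1 - b1) (a2 - b2)). pose proof (HL x y).
  pose proof (norm_ge0 (vsub (T x) (T y))). pose proof (sabs_ge0 ComplexK (mkC (a1-b1) (a2-b2))).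
  simpl in H2. pose proof (lip_ge0 X hX T c Hc).
  apply Rle_trans with ((Rabs (a1 - b1) + Rabs (a2 - b2)) * vnorm (vsub (T x) (T y))).
  - apply Rmult_le_compat_r; auto.
  - rewrite Rmult_assoc. apply Rmult_le_compat_l; auto.
    pose proof (Rabs_pos (a1 - b1)). pose proof (Rabs_pos (a2 - b2)). lra. Qed.

Lemma sq_cont c : -1 <= c <= 1 -> continuity_pt (fun x => sqrt (1 - x*x)) c.
Proof. intros Hc.
  change (fun x => sqrt (1 - x*x)) with (comp sqrt (fun x => 1 - x*x)).
  apply continuity_pt_comp.
  - assert (continuity (fun x => 1 - x*x)) by reg. apply H.
  - apply continuity_pt_sqrt. nra. Qed.

Lemma G_cont (X : BanachSpace ComplexK) (hX : exists x : X, x <> vzero X) T sg c :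
  Lip0 X T -> Rabs sg = 1 -> -1 <= c <= 1 ->
  continuity_pt (fun x => lipnorm X (IplusT X (mkC x (sg * sqrt (1 - x*x))) T)) c.
Proof.
  intros HT Hsg Hc. pose proof (sq_cont c Hc) as Hsq.
  set (L := lipnorm X T).
  assert (L0 : 0 <= L) by (destruct (Lip0_b X T HT) as [cc Hcc]; apply (lip_ge0 X hX T cc Hcc)).
  unfold continuity_pt, continue_in, limit1_in, limit_in in *. simpl in *. unfold R_dist in *.
  intros eps He.
  set (e' := eps / (2 * (L + 1))).
  assert (e'p : 0 < e') by (unfold e'; apply Rdiv_lt_0_compat; lra).
  destruct (Hsq e' e'p) as [d1 [d1p Hd1]].
  exists (Rmin d1 e'). split. apply Rmin_pos; lra.
  intros x [Dx Hx]. pose proof (Rmin_l d1 e'). pose proof (Rmin_r d1 e').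
  assert (B1 : Rabs (sqrt (1 - x*x) - sqrt (1 - c*c)) < e') by (apply Hd1; split; auto; lra).
  assert (B2 : Rabs (sg * sqrt (1 - x * x) - sg * sqrt (1 - c * c)) < e').
  { rewrite <- Rmult_minus_distr_l, Rabs_mult, Hsg. lra. }
  assert (B3 : Rabs (x - c) < e') by lra.
  pose proof (crot_close X hX T x (sg * sqrt (1 - x * x)) c (sg * sqrt (1 - c * c)) HT).
  pose proof (crot_close X hX T c (sg * sqrt (1 - c * c)) x (sg * sqrt (1 - x * x)) HT).
  fold L in H1, H2. rewrite (Rabs_minus_sym c x), (Rabs_minus_sym (sg * sqrt (1 - c * c))) in H2.
  assert ((Rabs (x - c) + Rabs (sg * sqrt (1 - x * x) - sg * sqrt (1 - c * c))) * L <= (2 * e') * L)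
    by (apply Rmult_le_compat_r; lra).
  assert (2 * e' * L < eps).
  { unfold e'. apply (Rmult_lt_reg_r (L + 1)); [lra|].
    replace (2 * (eps / (2 * (L + 1))) * L * (L + 1)) with (eps * L) by (field; lra). nra. }
  apply Rabs_def1; lra.
Qed.

Lemma unit_decomp (p q : R) : Cabs (mkC p q) = 1 ->
  -1 <= p <= 1 /\ exists sg, Rabs sg = 1 /\ q = sg * sqrt (1 - p * p).
Proof. intro H. unfold Cabs in H; cbn [cre cim] in H.
  assert (E : p ^ 2 + q ^ 2 = 1).
  { rewrite <- (sqrt_sqrt (p^2+q^2)) by nra. rewrite H. ring. }
  split. simpl in E. split; nra.
  assert (Eq : sqrt (1 - p * p) = Rabs q).
  { rewrite <- sqrt_Rsqr_abs. f_equal. unfold Rsqr. simpl in E. lra. }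
  rewrite Eq. destruct (Rle_dec 0 q).
  - exists 1. rewrite Rabs_R1, Rabs_right by lra. split; auto; ring.
  - exists (- (1)). rewrite Rabs_Ropp, Rabs_R1, Rabs_left by lra. split; auto; ring.
Qed.

Lemma unit_mk (x sg : R) : Rabs sg = 1 -> -1 <= x <= 1 -> Cabs (mkC x (sg * sqrt (1 - x * x))) = 1.
Proof. intros Hs Hx. unfold Cabs; cbn [cre cim]. transitivity (sqrt 1); [|apply sqrt_1]. f_equal.
  assert (sg * sg = 1).
  { destruct (Rle_dec 0 sg). rewrite Rabs_right in Hs by lra. subst; ring.
    rewrite Rabs_left in Hs by lra. nra. }
  replace ((sg * sqrt (1 - x * x)) ^ 2) with ((sg * sg) * (sqrt (1 - x*x) * sqrt (1 - x*x))) by ring.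
  rewrite sqrt_sqrt by nra. rewrite H. ring. Qed.

Lemma rot_max {k} (X : BanachSpace k) (hX : exists x : X, x <> vzero X) T : Lip0 X T ->
  exists a, sabs k a = 1 /\ forall b, sabs k b = 1 ->
    lipnorm X (IplusT X b T) <= lipnorm X (IplusT X a T).
Proof.
  revert X hX T. destruct k; intros X hX T HT.
  - set (G := fun a : R => lipnorm X (IplusT X a T)).
    assert (Hb : forall b : R, Rabs b = 1 -> b = 1 \/ b = - (1)).
    { intros b Hb. destruct (Rle_dec 0 b). rewrite Rabs_right in Hb; lra. rewrite Rabs_left in Hb; lra. }
    destruct (Rle_dec (G (- (1))) (G 1)).
    + exists 1. split. simpl; apply Rabs_R1. intros b Hb'. destruct (Hb b Hb'); subst; fold (G 1) (G (-(1))); simpl in *; lra.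
    + exists (- (1)). split. simpl; rewrite Rabs_Ropp; apply Rabs_R1.
      intros b Hb'. destruct (Hb b Hb'); subst; fold (G 1) (G (-(1))); simpl in *; lra.
  - set (G := fun sg x => lipnorm X (IplusT X (mkC x (sg * sqrt (1 - x*x))) T)).
    assert (H1 : Rabs 1 = 1) by apply Rabs_R1.
    assert (H2 : Rabs (- (1)) = 1) by (rewrite Rabs_Ropp; apply Rabs_R1).
    destruct (continuity_ab_maj (G 1) (-1) 1) as [m1 [Hm1 Im1]]. lra.
    { intros c Hc. apply (G_cont X hX T 1 c HT H1 Hc). }
    destruct (continuity_ab_maj (G (- (1))) (-1) 1) as [m2 [Hm2 Im2]]. lra.
    { intros c Hc. apply (G_cont X hX T (- (1)) c HT H2 Hc). }
    assert (all : forall b : Scal ComplexK, sabs ComplexK b = 1 ->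
              lipnorm X (IplusT X b T) <= Rmax (G 1 m1) (G (- (1)) m2)).
    { intros [p q] Hb. simpl in Hb. destruct (unit_decomp p q Hb) as [Hp [sg [Hsg ->]]].
      assert (sg = 1 \/ sg = - (1)).
      { destruct (Rle_dec 0 sg). rewrite Rabs_right in Hsg; lra. rewrite Rabs_left in Hsg; lra. }
      destruct H; subst sg.
      - pose proof (Hm1 p Hp). unfold G in *. pose proof (Rmax_l (G 1 m1) (G (- (1)) m2)). unfold G in *. lra.
      - pose proof (Hm2 p Hp). unfold G in *. pose proof (Rmax_r (G 1 m1) (G (- (1)) m2)). unfold G in *. lra. }
    destruct (Rle_dec (G (- (1)) m2) (G 1 m1)).
    + exists (mkC m1 (1 * sqrt (1 - m1 * m1))). split. apply unit_mk; auto.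
      intros b Hb. pose proof (all b Hb). rewrite Rmax_left in H by lra. exact H.
    + exists (mkC m2 (- (1) * sqrt (1 - m2 * m2))). split. apply unit_mk; auto.
      intros b Hb. pose proof (all b Hb). rewrite Rmax_right in H by lra. exact H.
Qed.

Lemma partB {k} (X : BanachSpace k) (hX : exists x : X, x <> vzero X) T : Lip0 X T ->
  (is_max (rot_norms X T) (1 + lipnorm X T) <-> omega X T = lipnorm X T).
Proof.
  intro HT. destruct (Lip0_b X T HT) as [c Hc].
  pose proof (lip_bound X hX T c Hc) as HL.
  split.
  - intros [[a [Ha E]] _].
    pose proof (partA X hX (scT a T) (scT_Lip0 X a T HT)) as PA.
    rewrite scT_lipnorm in PA by auto.
    change (fun x => vadd x (scT a T x)) with (IplusT X a T) in PA.
    rewrite <- E in PA. destruct PA as [PA _]. specialize (PA eq_refl).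
    pose proof (supReW_scT_le X hX a T HT Ha). pose proof (omega_le X hX T HT). lra.
  - intro Ho. destruct (rot_max X hX T HT) as [a [Ha Hmax]].
    assert (V1 : lipnorm X (IplusT X a T) <= 1 + lipnorm X T).
    { apply (lip_least X hX _ _ _ (IplusT_Lipb X a T c Hc)).
      pose proof (IplusT_Lipb X a T _ HL). rewrite Ha, Rmult_1_l in H. exact H. }
    assert (V2 : 1 + lipnorm X T <= lipnorm X (IplusT X a T)).
    { apply le_epsilon. intros eps He.
      destruct (lub_approx _ _ eps (omega_lub X hX T HT) He) as [r [[l [Hl ->]] Hr]].
      destruct (unit_rot k l) as [b [Hb Eb]].
      pose proof (G1 X hX T b l HT Hl). rewrite Eb in H. pose proof (Hmax b Hb). lra. }
    split.
    + exists a. split; auto. lra.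
    + intros r [b [Hb ->]]. pose proof (Hmax b Hb). lra.
Qed.

Lemma id_Lip0 {k} (X : BanachSpace k) (hX : exists x : X, x <> vzero X) :
  Lip0 X (fun x => x) /\ lipnorm X (fun x => x) = 1.
Proof.
  assert (Hb : Lipb (fun x : X => x) 1) by (intros x y; lra).
  split. split; auto. exists 1; auto.
  apply Rle_antisym. apply (lip_least X hX _ 1 1 Hb Hb).
  destruct (nontriv_pair X hX) as [x [y Hxy]].
  apply Rle_trans with (vnorm (vsub x y) / vnorm (vsub x y)).
  - pose proof (norm_pos x y Hxy). right. field. lra.
  - apply (lub_le _ _ _ (lip_lub X hX _ 1 Hb)). exists x, y. auto.
Qed.

Lemma nL_part {k} (X : BanachSpace k) (hX : exists x : X, x <> vzero X) :
  (nL X = 1 <->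
     forall T : X -> X, Lip0 X T -> lipnorm X T = 1 -> is_max (rot_norms X T) 2).
Proof.
  set (E := fun r => exists T : X -> X, Lip0 X T /\ lipnorm X T = 1 /\ r = omega X T).
  set (E' := fun r => E (- r)).
  assert (NL : nL X = - Rsup E') by reflexivity.
  destruct (id_Lip0 X hX) as [Hid1 Hid2].
  assert (Eid : E' (- omega X (fun x => x))).
  { unfold E', E. exists (fun x => x). rewrite Ropp_involutive. auto. }
  assert (Eub : forall r, E' r -> r <= 0).
  { intros r [T [HT [_ Hr]]]. pose proof (omega_ge0 X hX T HT). lra. }
  split.
  - intros H T HT HL.
    assert (HS : is_lub E' (Rsup E')) by (apply Rsup_spec; eauto).
    assert (ET : E' (- omega X T)) by (exists T; rewrite Ropp_involutive; auto).
    pose proof (lub_le _ _ _ HS ET). pose proof (omega_le X hX T HT).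
    assert (Ho : omega X T = lipnorm X T) by lra.
    apply (partB X hX T HT) in Ho. rewrite HL in Ho. replace 2 with (1 + 1) by ring. exact Ho.
  - intro H. rewrite NL.
    assert (all1 : forall r, E' r -> r = - (1)).
    { intros r [T [HT [HL Hr]]].
      pose proof (H T HT HL). replace 2 with (1 + lipnorm X T) in H0 by (rewrite HL; ring).
      apply (partB X hX T HT) in H0. lra. }
    rewrite (Rsup_lub E' (- (1))). ring.
    split.
    + intros r Hr. rewrite (all1 r Hr). lra.
    + intros b Hb. pose proof (Hb _ Eid). rewrite (all1 _ Eid) in H0. exact H0.
Qed.

Theorem corollary2p4 (k : kind) (X : BanachSpace k)
  (hX : exists x : X, x <> vzero X) :
  (forall T : X -> X, Lip0 X T ->
     (lipnorm X (fun x => vadd x (T x)) = 1 + lipnorm X T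
        <-> supReW X T = lipnorm X T) /\
     (is_max (rot_norms X T) (1 + lipnorm X T)
        <-> omega X T = lipnorm X T)) /\
  (nL X = 1 <->
     forall T : X -> X, Lip0 X T -> lipnorm X T = 1 -> is_max (rot_norms X T) 2).
Proof.
  split.
  - intros T HT. split.
    + apply partA; auto.
    + apply partB; auto.
  - apply nL_part; auto.
Qed.
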